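(* Let $\kappa$ be an uncountable regular cardinal. There is no consonant joint diamond sequence of length $\kappa$ for $\kappa$.
   Context: A filter on $\kappa$ is normal if closed under diagonal intersections and uniform if it contains all cobounded sets. A $\kappa$-list is $d\colon\kappa\to\mathcal{P}(\kappa)$ with $d(\alpha)\subseteq\alpha$. A joint diamond sequence of length $\lambda$ for $\kappa$ is a sequence $\langle d_\alpha;\alpha<\lambda\rangle$ of $\kappa$-lists such that for every sequence $\langle a_\alpha;\alpha<\lambda\rangle$ of subsets of $\kappa$ there is a proper normal uniform filter $\mathcal{F}$ on $\kappa$ with $S_\alpha=\{\xi<\kappa: d_\alpha(\xi)=a_\alpha\cap\xi\}\in\mathcal{F}$ for all $\alpha$. Such a sequence is consonant if for every sequence of targets $\langle a_\alpha;\alpha<\lambda\rangle$ there is a stationary $S\subseteq\kappa$ with $S\subseteq S_\alpha$ for all $\alpha<\lambda$. *)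

(* Defs.v *)
(* The cardinal kappa is modelled as a type K carrying a
   strict well-order [lt]; "kappa is an uncountable regular cardinal" is
   expressed by the properties below (order-type invariant notions only). *)
From Stdlib Require Import Relations Wellfounded.

Set Implicit Arguments.

Section Kappa.
Variable K : Type.
Variable lt : K -> K -> Prop.

Definition is_well_order : Prop :=
  (forall x, ~ lt x x) /\
  (forall x y z, lt x y -> lt y z -> lt x z) /\
  (forall x y, lt x y \/ x = y \/ lt y x) /\
  well_founded lt.

Definition uncountable : Prop :=
  ~ exists f : K -> nat, forall x y, f x = f y -> x = y.

(* regular: cf(kappa) = kappa, i.e. no map from a proper initial
   segment {eta | eta < xi} is cofinal (every such map is bounded). *)
Definition regular : Prop :=
  forall (xi : K) (f : {eta : K | lt eta xi} -> K),
    exists beta, forall i, lt (f i) beta.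

Definition subset (A B : K -> Prop) : Prop := forall x, A x -> B x.

Definition cobounded (S : K -> Prop) : Prop :=
  exists beta, forall xi, ~ lt xi beta -> S xi.

Definition diag_int (X : K -> K -> Prop) : K -> Prop :=
  fun xi => forall alpha, lt alpha xi -> X alpha xi.

Definition proper_filter (F : (K -> Prop) -> Prop) : Prop :=
  F (fun _ => True) /\
  ~ F (fun _ => False) /\
  (forall A B, F A -> subset A B -> F B) /\
  (forall A B, F A -> F B -> F (fun x => A x /\ B x)).

Definition normal_filter (F : (K -> Prop) -> Prop) : Prop :=
  forall X : K -> K -> Prop, (forall alpha, F (X alpha)) -> F (diag_int X).

Definition uniform_filter (F : (K -> Prop) -> Prop) : Prop :=
  forall S, cobounded S -> F S.

Definition unbounded (C : K -> Prop) : Prop :=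
  forall beta, exists xi, lt beta xi /\ C xi.

Definition closed (C : K -> Prop) : Prop :=
  forall delta, (exists eta, lt eta delta) ->
    (forall eta, lt eta delta -> exists c, C c /\ lt eta c /\ lt c delta) ->
    C delta.

Definition club (C : K -> Prop) : Prop := closed C /\ unbounded C.

Definition stationary (S : K -> Prop) : Prop :=
  forall C, club C -> exists xi, S xi /\ C xi.

(* A kappa-list d : kappa -> P(kappa) with d(xi) ⊆ xi, given as a relation:
   [d xi eta] means eta ∈ d(xi). *)
Definition kappa_list (d : K -> K -> Prop) : Prop :=
  forall xi eta, d xi eta -> lt eta xi.

Definition guess_set (d : K -> K -> Prop) (a : K -> Prop) : K -> Prop :=
  fun xi => forall eta, d xi eta <-> (a eta /\ lt eta xi).

(* Joint diamond sequence of length kappa (indexed by K):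
   D alpha is the alpha-th kappa-list. *)
Definition joint_diamond (D : K -> K -> K -> Prop) : Prop :=
  (forall alpha, kappa_list (D alpha)) /\
  forall a : K -> K -> Prop,
    exists F : (K -> Prop) -> Prop,
      proper_filter F /\ normal_filter F /\ uniform_filter F /\
      forall alpha, F (guess_set (D alpha) (a alpha)).

Definition consonant (D : K -> K -> K -> Prop) : Prop :=
  forall a : K -> K -> Prop,
    exists S : K -> Prop, stationary S /\
      forall alpha, subset S (guess_set (D alpha) (a alpha)).

End Kappa.

(* Main.v *)
Require Import Defs.
From Stdlib Require Import Classical.

Theorem proposition5p2 (K : Type) (lt : K -> K -> Prop)
  (Hwo : is_well_order lt) (Hunc : uncountable K) (Hreg : regular lt) :
  ~ exists D : K -> K -> K -> Prop, joint_diamond lt D /\ consonant lt D.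
Proof.
  intros [D [_ Hcons]].
  destruct Hwo as [Hirr [Htr [Htot _]]].
  destruct (Hcons (fun al et => lt et al /\ ~ D al al et)) as [S [Hst Hsub]].
  assert (Hunb : forall beta, exists xi, lt beta xi).
  { intro beta. apply NNPP. intro Hn.
    assert (Hle : forall x, x = beta \/ lt x beta).
    { intro x. destruct (Htot x beta) as [h|[h|h]]; auto.
      exfalso; apply Hn; exists x; exact h. }
    destruct (Hreg beta (fun _ => beta)) as [g Hg].
    assert (Hnone : forall x, ~ lt x beta).
    { intros x hx. specialize (Hg (exist _ x hx)). simpl in Hg.
      apply Hn; exists g; exact Hg. }
    apply Hunc. exists (fun _ => 0). intros x y _.
    destruct (Hle x) as [->|h]; [|exfalso; eapply Hnone; eauto].
    destruct (Hle y) as [->|h]; [reflexivity|exfalso; eapply Hnone; eauto]. }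
  destruct (Hst (fun xi => exists eta, lt eta xi)) as [xi [HS [eta Heta]]].
  { split.
    - intros delta Hd _. exact Hd.
    - intro beta. destruct (Hunb beta) as [xi Hxi]. exists xi. split; [exact Hxi|].
      exists beta; exact Hxi. }
  specialize (Hsub xi xi HS eta). simpl in Hsub.
  destruct (classic (D xi xi eta)) as [h|h].
  - destruct (proj1 Hsub h) as [[_ h'] _]. contradiction.
  - apply h. apply (proj2 Hsub). split; [split; assumption | assumption].
Qed.
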